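(* Let $A$ be a subring of a ring $B$ and assume that $B$, as a left $A$-module, has a resolution by finitely generated free $A$-modules. Then a $B$-module $M$ has a resolution by finitely generated free $B$-modules if and only if it has a resolution by finitely generated free $A$-modules.
   Context: All rings are associative with identity and modules are unitary left modules. A resolution of $M$ by finitely generated free modules is an exact sequence $\cdots\to F^{-1}\to F^0\to M\to0$ with all $F^k$ finitely generated and free. *)

(* Defs.v *)
From HB Require Import structures.
From mathcomp Require Import all_boot all_order all_algebra.
Set Implicit Arguments. Unset Strict Implicit. Unset Printing Implicit Defensive.
Import GRing.Theory.
Local Open Scope ring_scope.

Definition is_Rlinear (R : pzRingType) (U V : zmodType)
  (actU : R -> U -> U) (actV : R -> V -> V) (g : U -> V) : Prop :=
  (forall x y : U, g (x + y) = g x + g y) /\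
  (forall (a : R) (x : U), g (actU a x) = actV a (g x)).

(* M (a zmodType with left R-action act) has a resolution
     ... -> R^(n 2) -> R^(n 1) -> R^(n 0) -> M -> 0
   by finitely generated free left R-modules R^(n k) = 'rV[R]_(n k)
   (with the left action (a *: v) i = a * v i). *)
Definition has_fgfree_resolution (R : pzRingType) (M : zmodType)
  (act : R -> M -> M) : Prop :=
  exists (n : nat -> nat)
         (d : forall k : nat, 'rV[R]_(n k.+1) -> 'rV[R]_(n k))
         (eps : 'rV[R]_(n 0%N) -> M),
    is_Rlinear (fun a v => a *: v) act eps /\
    (forall k, is_Rlinear (fun a v => a *: v) (fun a v => a *: v) (d k)) /\
    (forall m : M, exists x, eps x = m) /\
    (forall x, eps x = 0 <-> exists y, d 0%N y = x) /\
    (forall k x, d k x = 0 <-> exists y, d k.+1 y = x).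

(* Main.v *)
Require Import Defs.
From mathcomp Require Import all_boot all_order all_algebra.
From Stdlib Require Import ClassicalEpsilon.
Set Implicit Arguments. Unset Strict Implicit. Unset Printing Implicit Defensive.
Import GRing.Theory.
Local Open Scope ring_scope.
Set Implicit Arguments.

Definition ismod (R : pzRingType) (V : zmodType) (act : R -> V -> V) : Prop :=
  [/\ (forall a u v, act a (u + v) = act a u + act a v),
      (forall a b v, act (a + b) v = act a v + act b v),
      (forall a b v, act a (act b v) = act (a * b) v) &
      (forall v, act 1 v = v)].

Definition submod (R : pzRingType) (V : zmodType) (act : R -> V -> V) (P : V -> Prop) : Prop :=
  [/\ P 0, (forall u v, P u -> P v -> P (u + v)), (forall u, P u -> P (- u)) &
      (forall a u, P u -> P (act a u))].

Fixpoint FP (R : pzRingType) (k : nat) (V : zmodType) (act : R -> V -> V) (S : V -> Prop)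
  {struct k} : Prop :=
  exists n (e : 'rV[R]_n -> V), is_Rlinear (fun a v => a *: v) act e /\
   (forall v, S v <-> exists x, e x = v) /\
   match k with 0 => True | k'.+1 => FP k' (fun a v => a *: v) (fun x => e x = 0) end.

Section Gen.
Variable R : pzRingType.

Lemma ismod_free n : ismod (fun (a : R) (v : 'rV[R]_n) => a *: v).
Proof. by split=> *; rewrite ?scalerDr ?scalerDl ?scalerA ?scale1r. Qed.

Lemma ismod_act0 (V : zmodType) (act : R -> V -> V) : ismod act -> forall a, act a 0 = 0.
Proof. case=> H1 _ _ _ a.
  have h : act a 0 + act a 0 = act a 0 + 0 by rewrite -H1 !addr0.
  exact: (addrI _ h). Qed.

Lemma ismod_actN (V : zmodType) (act : R -> V -> V) : ismod act -> forall a v, act a (- v) = - act a v.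
Proof. move=> H a v; apply/eqP; rewrite -addr_eq0; case: (H)=> H1 _ _ _.
  by rewrite -H1 addNr (ismod_act0 H). Qed.

Section Lin.
Variables (U V : zmodType) (actU : R -> U -> U) (actV : R -> V -> V).

Lemma lin0 (g : U -> V) : is_Rlinear actU actV g -> g 0 = 0.
Proof. case=> H _.
  have h : g 0 + g 0 = g 0 + 0 by rewrite -H !addr0.
  exact: (addrI _ h). Qed.

Lemma linN (g : U -> V) : is_Rlinear actU actV g -> forall x, g (- x) = - g x.
Proof. move=> H x; apply/eqP; rewrite -addr_eq0; case: (H)=> H1 _.
  by rewrite -H1 addNr (lin0 H). Qed.

Lemma linB (g : U -> V) : is_Rlinear actU actV g -> forall x y, g (x - y) = g x - g y.
Proof. move=> H x y; case: (H) => H1 _; by rewrite H1 (linN H). Qed.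

Lemma lin_sum (g : U -> V) I (r : seq I) (F : I -> U) : is_Rlinear actU actV g ->
  g (\sum_(i <- r) F i) = \sum_(i <- r) g (F i).
Proof. move=> H; case: (H)=> H1 _; exact: (big_morph g H1 (lin0 H)). Qed.

Lemma submod_ker (g : U -> V) : ismod actV -> is_Rlinear actU actV g ->
  submod actU (fun x => g x = 0).
Proof. move=> HV H; case: (H) => H1 H2; split.
- exact: lin0 H.
- by move=> u v Hu Hv; rewrite H1 Hu Hv addr0.
- by move=> u Hu; rewrite (linN H) Hu oppr0.
- by move=> a u Hu; rewrite H2 Hu (ismod_act0 HV).
Qed.
End Lin.

Lemma lin_comp (U V W : zmodType) (aU : R -> U -> U) (aV : R -> V -> V) (aW : R -> W -> W)
  (g : U -> V) (h : V -> W) : is_Rlinear aU aV g -> is_Rlinear aV aW h ->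
  is_Rlinear aU aW (fun x => h (g x)).
Proof. by case=> g1 g2 [h1 h2]; split=> *; rewrite ?g1 ?g2 ?h1 ?h2. Qed.

Lemma lin_add (U V : zmodType) (aU : R -> U -> U) (aV : R -> V -> V)
  (g h : U -> V) : ismod aV -> is_Rlinear aU aV g -> is_Rlinear aU aV h ->
  is_Rlinear aU aV (fun x => g x + h x).
Proof. case=> HV _ _ _ [g1 g2] [h1 h2]; split=> *; rewrite ?g1 ?g2 ?h1 ?h2 ?HV //.
  by rewrite addrACA. Qed.

Lemma lin_opp (U V : zmodType) (aU : R -> U -> U) (aV : R -> V -> V)
  (g : U -> V) : ismod aV -> is_Rlinear aU aV g -> is_Rlinear aU aV (fun x => - g x).
Proof. move=> HV [g1 g2]; split=> *; rewrite ?g1 ?g2 ?(ismod_actN HV) //. by rewrite opprD. Qed.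

Lemma lin_id (U : zmodType) (aU : R -> U -> U) : is_Rlinear aU aU id.
Proof. by []. Qed.

Lemma lin_lsub m n : is_Rlinear (fun a v => a *: v) (fun a v => a *: v)
   (fun x : 'rV[R]_(m + n) => lsubmx x).
Proof. by split=> *; apply/matrixP=> i j; rewrite !mxE. Qed.

Lemma lin_rsub m n : is_Rlinear (fun a v => a *: v) (fun a v => a *: v)
   (fun x : 'rV[R]_(m + n) => rsubmx x).
Proof. by split=> *; apply/matrixP=> i j; rewrite !mxE. Qed.

Lemma lin_rowmx p m n (g : 'rV[R]_p -> 'rV[R]_m) (h : 'rV[R]_p -> 'rV[R]_n) :
  is_Rlinear (fun a v => a *: v) (fun a v => a *: v) g ->
  is_Rlinear (fun a v => a *: v) (fun a v => a *: v) h ->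
  is_Rlinear (fun a v => a *: v) (fun a v => a *: v) (fun x => row_mx (g x) (h x)).
Proof. case=> g1 g2 [h1 h2]; split=> *; by rewrite ?g1 ?g2 ?h1 ?h2 ?add_row_mx ?scale_row_mx. Qed.

Lemma lin_zero (U V : zmodType) (aU : R -> U -> U) (aV : R -> V -> V) : ismod aV ->
  is_Rlinear aU aV (fun _ => 0).
Proof. by move=> HV; split=> *; rewrite ?addr0 ?(ismod_act0 HV). Qed.

End Gen.
Set Implicit Arguments.

Section Gen2.
Variable R : pzRingType.
Notation fr := (fun (a : R) v => a *: v).

Lemma act_sum (V : zmodType) (act : R -> V -> V) a I (r : seq I) (F : I -> V) : ismod act ->
  act a (\sum_(i <- r) F i) = \sum_(i <- r) act a (F i).
Proof. move=> H; case: (H) => H1 _ _ _; exact: (big_morph (act a) (H1 a) (ismod_act0 H a)). Qed.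

Lemma lin_comb m (V : zmodType) (act : R -> V -> V) (v : 'I_m -> V) : ismod act ->
  is_Rlinear fr act (fun y : 'rV[R]_m => \sum_i act (y 0 i) (v i)).
Proof.
move=> H; case: (H) => H1 H2 H3 H4; split.
- move=> x y; rewrite -big_split; apply: eq_bigr => i _; by rewrite mxE H2.
- move=> a x; rewrite (act_sum _ _ _ H); apply: eq_bigr => i _; by rewrite mxE H3.
Qed.

Lemma liftf m (V W : zmodType) (aV : R -> V -> V) (aW : R -> W -> W) (P : V -> Prop)
  (q : 'rV[R]_m -> W) (psi : V -> W) : ismod aV -> submod aV P ->
  is_Rlinear fr aW q -> is_Rlinear aV aW psi ->
  (forall w, (exists y, q y = w) -> exists v, P v /\ psi v = w) ->
  exists s, is_Rlinear fr aV s /\ (forall y, P (s y)) /\ forall y, psi (s y) = q y.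
Proof.
move=> HV [P0 PD PN PZ] Hq Hpsi Hs.
have H i : exists v, P v /\ psi v = q (delta_mx 0 i) by apply: Hs; eexists.
pose vf i := proj1_sig (constructive_indefinite_description _ (H i)).
have Hvf i : P (vf i) /\ psi (vf i) = q (delta_mx 0 i).
  exact: (proj2_sig (constructive_indefinite_description _ (H i))).
exists (fun y : 'rV[R]_m => \sum_i aV (y 0 i) (vf i)); split; first exact: lin_comb.
split.
- move=> y; apply: (big_ind P) => //= i _; apply: PZ; exact: (Hvf i).1.
- move=> y; rewrite (lin_sum _ _ Hpsi); rewrite {2}(row_sum_delta y) (lin_sum _ _ Hq).
  apply: eq_bigr => i _; case: Hpsi => _ ->; rewrite (Hvf i).2; by case: Hq => _ ->.
Qed.

Lemma FP_ext k (V : zmodType) (act : R -> V -> V) (S S' : V -> Prop) :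
  (forall v, S v <-> S' v) -> FP k act S -> FP k act S'.
Proof.
move=> HS; case: k => [|k] [n [e [He [Him Hk]]]]; exists n, e; split=> //; split=> // v;
  by rewrite -HS.
Qed.

Lemma FP0_img (V W : zmodType) (aV : R -> V -> V) (aW : R -> W -> W) (S : V -> Prop)
  (T : W -> Prop) (phi : V -> W) : is_Rlinear aV aW phi ->
  (forall w, T w <-> exists v, S v /\ phi v = w) -> FP 0 aV S -> FP 0 aW T.
Proof.
move=> Hphi HT [n [e [He [Him _]]]]; exists n, (fun x => phi (e x)); split.
  exact: lin_comp He Hphi.
split=> // w; rewrite HT; split.
- by case=> v [/Him [x <-] <-]; exists x.
- by case=> x <-; exists (e x); split=> //; apply/Him; exists x.
Qed.

Lemma FP_inj k (V W : zmodType) (aV : R -> V -> V) (aW : R -> W -> W) (S : V -> Prop)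
  (T : W -> Prop) (phi : V -> W) : is_Rlinear aV aW phi -> injective phi ->
  (forall w, T w <-> exists v, S v /\ phi v = w) -> FP k aV S -> FP k aW T.
Proof.
case: k => [|k]; first by move=> ? _; exact: FP0_img.
move=> Hphi Hinj HT [n [e [He [Him Hk]]]]; exists n, (fun x => phi (e x)); split.
  exact: lin_comp He Hphi.
split.
- move=> w; rewrite HT; split.
  + by case=> v [/Him [x <-] <-]; exists x.
  + by case=> x <-; exists (e x); split=> //; apply/Him; exists x.
- apply: FP_ext Hk => x; split; first by move=> ->; rewrite (lin0 Hphi).
  by rewrite -(lin0 Hphi) => /Hinj.
Qed.

Lemma FP_weak k (V : zmodType) (act : R -> V -> V) (S : V -> Prop) :
  FP k.+1 act S -> FP k act S.
Proof.
elim: k V act S => [|k IH] V act S [n [e [He [Him Hk]]]]; exists n, e; do 2!split=> //.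
exact: IH.
Qed.

Lemma FP_to0 k (V : zmodType) (act : R -> V -> V) (S : V -> Prop) :
  FP k act S -> FP 0 act S.
Proof. elim: k => [//|k IH] H; apply: IH; exact: FP_weak. Qed.

Lemma FP_zero k (V : zmodType) (act : R -> V -> V) : ismod act -> FP k act (fun v => v = 0).
Proof.
elim: k V act => [|k IH] V act HV; exists 0%N, (fun _ => 0); (split; first exact: lin_zero).
- by split=> // v; split=> [->|[_ <-]] //; exists 0.
- split; first by move=> v; split=> [->|[_ <-]] //; exists 0.
  apply: FP_ext (IH _ _ (ismod_free _ _)) => x; split=> // _; exact: thinmx0.
Qed.

Lemma FP_free k n : FP k (fun (a : R) (v : 'rV[R]_n) => a *: v) (fun _ => True).
Proof.
case: k => [|k]; exists n, id; (split; first exact: lin_id).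
- by split=> // v; split=> // _; exists v.
- split; first by move=> v; split=> // _; exists v.
  apply: FP_zero; exact: ismod_free.
Qed.

End Gen2.
Set Implicit Arguments.

Section Gen3.
Variable R : pzRingType.
Notation fr := (fun (a : R) v => a *: v).

Lemma ext_data p m (V W : zmodType) (aV : R -> V -> V) (aW : R -> W -> W)
  (P : V -> Prop) (Q : W -> Prop) (psi : V -> W) (r : 'rV[R]_p -> V) (q : 'rV[R]_m -> W) :
  ismod aV -> submod aV P -> is_Rlinear aV aW psi ->
  (forall w, Q w <-> exists v, P v /\ psi v = w) ->
  is_Rlinear fr aV r -> (forall v, P v /\ psi v = 0 <-> exists z, r z = v) ->
  is_Rlinear fr aW q -> (forall w, Q w <-> exists y, q y = w) ->
  exists s : 'rV[R]_m -> V, [/\ is_Rlinear fr aV s, (forall y, P (s y)),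
     (forall y, psi (s y) = q y) &
     (forall v, P v <-> exists x : 'rV[R]_(p + m), r (lsubmx x) + s (rsubmx x) = v)].
Proof.
move=> HV HP Hpsi HQ Hr Himr Hq Himq.
have [s [Hs [Hs2 Hs3]]] : exists s : 'rV[R]_m -> V, is_Rlinear fr aV s /\
   (forall y, P (s y)) /\ forall y, psi (s y) = q y.
  by apply: (liftf (aV := aV) (aW := aW) (q := q) (psi := psi)) => // w Hw; apply/HQ; apply/Himq; exact: Hw.
case: (HP) => P0 PD PN PZ.
exists s; split=> // v; split.
- move=> Pv; have [y Hy] : exists y, q y = psi v by apply/Himq; apply/HQ; exists v.
  have [z Hz] : exists z, r z = v - s y.
    apply/Himr; split; first exact: PD Pv (PN _ (Hs2 y)).
    by rewrite (linB Hpsi) Hs3 Hy subrr.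
  by exists (row_mx z y); rewrite row_mxKl row_mxKr Hz subrK.
- case=> x <-; apply: PD (Hs2 _).
  by have [] : P (r (lsubmx x)) /\ psi (r (lsubmx x)) = 0 by apply/Himr; eexists.
Qed.

Lemma ext k : forall (V W : zmodType) (aV : R -> V -> V) (aW : R -> W -> W)
  (P : V -> Prop) (Q : W -> Prop) (psi : V -> W),
  ismod aV -> submod aV P -> is_Rlinear aV aW psi ->
  (forall w, Q w <-> exists v, P v /\ psi v = w) ->
  FP k aV (fun v => P v /\ psi v = 0) -> FP k aW Q -> FP k aV P.
Proof.
elim: k => [|k IH] V W aV aW P Q psi HV HP Hpsi HQ [p [r [Hr [Himr Hkr]]]]
  [m [q [Hq [Himq Hkq]]]];
 have [s [Hs Hs2 Hs3 imE]] := ext_data HV HP Hpsi HQ Hr Himr Hq Himq;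
 pose E := fun x : 'rV[R]_(p + m) => r (lsubmx x) + s (rsubmx x);
 (have linE : is_Rlinear fr aV E by
   apply: lin_add HV (lin_comp (lin_lsub _ _ _) Hr) (lin_comp (lin_rsub _ _ _) Hs));
 exists (p + m)%N, E; (split; first exact: linE); split=> //.
apply: (IH _ _ _ _ _ (fun y => q y = 0) (fun x => rsubmx x)).
- exact: ismod_free.
- exact: submod_ker HV linE.
- exact: lin_rsub.
- move=> y; split.
  + move=> Hy; have [z Hz] : exists z, r z = s y by apply/Himr; split=> //; rewrite Hs3.
    exists (row_mx (- z) y); by rewrite /E row_mxKl row_mxKr (linN Hr) Hz addNr.
  + case=> x [HE <-]; have := f_equal psi HE; rewrite /E.
    case: (Hpsi) => Hpsi1 _; rewrite Hpsi1 Hs3 (lin0 Hpsi).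
    have [_ ->] : P (r (lsubmx x)) /\ psi (r (lsubmx x)) = 0 by apply/Himr; eexists.
    by rewrite add0r.
- apply: (FP_inj (phi := fun z => row_mx z (0 : 'rV[R]_m))) Hkr.
  + apply: lin_rowmx; [exact: lin_id | exact: lin_zero (ismod_free _ _)].
  + by move=> z z' /eq_row_mx [].
  + move=> x; split.
    * case=> HE Hr0; exists (lsubmx x); split; last by rewrite -Hr0 hsubmxK.
      by move: HE; rewrite /E Hr0 (lin0 Hs) addr0.
    * case=> z [Hz <-]; split; last by rewrite row_mxKr.
      by rewrite /E row_mxKl row_mxKr Hz (lin0 Hs) addr0.
- exact: Hkq.
Qed.

Lemma quot k (V W : zmodType) (aV : R -> V -> V) (aW : R -> W -> W)
  (S : V -> Prop) (T : W -> Prop) (phi : V -> W) :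
  ismod aW -> is_Rlinear aV aW phi ->
  (forall w, T w <-> exists v, S v /\ phi v = w) ->
  FP k aV (fun v => S v /\ phi v = 0) -> FP k.+1 aV S -> FP k.+1 aW T.
Proof.
move=> HW Hphi HT HK [n [e [He [Him Hk]]]]; exists n, (fun x => phi (e x)); split.
  exact: lin_comp He Hphi.
split.
- move=> w; rewrite HT; split.
  + by case=> v [/Him [x <-] <-]; exists x.
  + by case=> x <-; exists (e x); split=> //; apply/Him; exists x.
- apply: (ext (P := fun x => phi (e x) = 0) (Q := fun v => S v /\ phi v = 0) (psi := e)).
  + exact: ismod_free.
  + exact: submod_ker HW (lin_comp He Hphi).
  + exact: He.
  + move=> v; split.
    * by case=> /Him [x Hx] Hv; exists x; rewrite Hx.
    * by case=> x [H <-]; split=> //; apply/Him; exists x.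
  + apply: FP_ext Hk => x; split; last by case.
    by move=> H; rewrite H (lin0 Hphi).
  + exact: HK.
Qed.

Lemma SCH k (V : zmodType) (act : R -> V -> V) (S : V -> Prop) n2
  (e2 : 'rV[R]_n2 -> V) : ismod act -> is_Rlinear fr act e2 ->
  (forall v, S v <-> exists x, e2 x = v) -> FP k.+1 act S -> FP k fr (fun x => e2 x = 0).
Proof.
move=> HV He2 HS2 [n1 [e1 [He1 [HS1 Hk1]]]].
have [h [Hh [_ Hh3]]] : exists h : 'rV[R]_n2 -> 'rV[R]_n1, is_Rlinear (fun (a : R) (v : 'rV[R]_n2) => a *: v) fr h /\
    (forall y : 'rV[R]_n2, True) /\ forall y, e1 (h y) = e2 y.
  apply: (liftf (aV := fr) (aW := act) (P := fun _ => True) (q := e2) (psi := e1)) => //;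
    try exact: ismod_free; try by split.
  move=> w [y <-]; have /HS1 [x Hx] : S (e2 y) by (apply/HS2; exists y).
  by exists x.
have [g [Hg [_ Hg3]]] : exists g : 'rV[R]_n1 -> 'rV[R]_n2, is_Rlinear (fun (a : R) (v : 'rV[R]_n1) => a *: v) fr g /\
    (forall y : 'rV[R]_n1, True) /\ forall y, e2 (g y) = e1 y.
  apply: (liftf (aV := fr) (aW := act) (P := fun _ => True) (q := e1) (psi := e2)) => //;
    try exact: ismod_free; try by split.
  move=> w [y <-]; have /HS2 [x Hx] : S (e1 y) by (apply/HS1; exists y).
  by exists x.
pose L := fun x : 'rV[R]_(n1 + n2) => e1 (lsubmx x) + e2 (rsubmx x) = 0.
have linL : is_Rlinear fr act (fun x : 'rV[R]_(n1 + n2) => e1 (lsubmx x) + e2 (rsubmx x)).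
  exact: lin_add HV (lin_comp (lin_lsub _ _ _) He1) (lin_comp (lin_rsub _ _ _) He2).
have FPL : FP k fr L.
  apply: (ext (psi := fun x => rsubmx x) (Q := fun _ => True)).
  - exact: ismod_free.
  - exact: submod_ker HV linL.
  - exact: lin_rsub.
  - move=> y; split=> // _; exists (row_mx (- h y) y); split; last by rewrite row_mxKr.
    by rewrite /L row_mxKl row_mxKr (linN He1) Hh3 addNr.
  - apply: (FP_inj (phi := fun z => row_mx z (0 : 'rV[R]_n2))) Hk1.
    + apply: lin_rowmx; [exact: lin_id | exact: lin_zero (ismod_free _ _)].
    + by move=> z z' /eq_row_mx [].
    + move=> x; split.
      * case=> HL Hr0; exists (lsubmx x); split; last by rewrite -Hr0 hsubmxK.
        by move: HL; rewrite /L Hr0 (lin0 He2) addr0.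
      * case=> z [Hz <-]; split; last by rewrite row_mxKr.
        by rewrite /L row_mxKl row_mxKr Hz (lin0 He2) addr0.
  - exact: FP_free.
pose phi := fun x : 'rV[R]_(n1 + n2) => rsubmx x + g (lsubmx x).
have linphi : is_Rlinear fr fr phi.
  exact: lin_add (ismod_free _ _) (lin_rsub _ _ _) (lin_comp (lin_lsub _ _ _) Hg).
have HT : forall y, e2 y = 0 <-> exists x, L x /\ phi x = y.
  move=> y; split.
  - move=> Hy; exists (row_mx 0 y); split.
      by rewrite /L row_mxKl row_mxKr (lin0 He1) add0r.
    by rewrite /phi row_mxKl row_mxKr (lin0 Hg) addr0.
  - case=> x [HL <-]; case: (He2) => He2a _; by rewrite /phi He2a Hg3 addrC.
case: k FPL Hk1 => [|k] FPL Hk1.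
  exact: FP0_img linphi HT FPL.
apply: (quot (aV := fun (a : R) (v : 'rV[R]_(n1 + n2)) => a *: v) (S := L) (phi := phi)) => //; first exact: ismod_free.
apply: (FP_inj (phi := fun u : 'rV[R]_n1 => (row_mx u (- g u) : 'rV[R]_(n1 + n2))) _ _ _ (FP_free _ k n1)).
- apply: lin_rowmx; [exact: lin_id | exact: lin_opp (ismod_free _ _) Hg].
- by move=> z z' /eq_row_mx [].
- move=> x; split.
  + case=> HL Hphi; exists (lsubmx x); split=> //.
    rewrite -[RHS](hsubmxK x); congr row_mx.
    by apply/eqP; rewrite eq_sym -addr_eq0; apply/eqP.
  + case=> u [_ <-]; split.
      by rewrite /L row_mxKl row_mxKr (linN He2) Hg3 subrr.
    by rewrite /phi row_mxKl row_mxKr addNr.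
Qed.

Lemma kern k (V W : zmodType) (aV : R -> V -> V) (aW : R -> W -> W)
  (P : V -> Prop) (Q : W -> Prop) (psi : V -> W) :
  ismod aV -> ismod aW -> is_Rlinear aV aW psi ->
  (forall w, Q w <-> exists v, P v /\ psi v = w) ->
  FP k aV P -> FP k.+1 aW Q -> FP k aV (fun v => P v /\ psi v = 0).
Proof.
move=> HV HW Hpsi HQ HP HQk; have [m [e [He [HPe _]]]] := FP_to0 HP.
have HSe : FP k fr (fun x => psi (e x) = 0).
  apply: (SCH HW (lin_comp He Hpsi) _ HQk) => w; rewrite HQ; split.
  - by case=> v [/HPe [x <-] <-]; exists x.
  - by case=> x <-; exists (e x); split=> //; apply/HPe; exists x.
have Him : forall v, P v /\ psi v = 0 <-> exists x, psi (e x) = 0 /\ e x = v.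
  move=> v; split.
  - by case=> /HPe [x <-] H; exists x.
  - by case=> x [H <-]; split=> //; apply/HPe; exists x.
case: k HP HSe HQk => [|k] HP HSe HQk.
  exact: FP0_img He Him HSe.
apply: (quot (S := fun x => psi (e x) = 0) (phi := e) HV He Him _ HSe).
apply: FP_ext (SCH HV He HPe HP) => x; split; last by case.
by move=> H; rewrite H (lin0 Hpsi).
Qed.

End Gen3.
Set Implicit Arguments.

Section Res.
Variable R : pzRingType.
Notation fr := (fun (a : R) v => a *: v).

Lemma ismod_lmod (M : lmodType R) : ismod (fun (a : R) (m : M) => a *: m).
Proof. by split=> *; rewrite ?scalerDr ?scalerDl ?scalerA ?scale1r. Qed.

Lemma res_to_FP (M : zmodType) (act : R -> M -> M) :
  has_fgfree_resolution act -> forall k, FP k act (fun _ => True).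
Proof.
case=> n [d [eps [Heps [Hd [Hsurj [H0 Hex]]]]]].
have Himd : forall k j, FP k fr (fun x : 'rV[R]_(n j) => exists y, d j y = x).
  elim=> [|k IH] j; exists (n j.+1), (d j); (split; first exact: Hd); split=> //.
  by apply: FP_ext (IH j.+1) => x; rewrite Hex.
case=> [|k]; exists (n 0%N), eps; (split; first exact: Heps).
- by split=> // v; split=> // _; exact: Hsurj.
- split; first by move=> v; split=> // _; exact: Hsurj.
  by apply: FP_ext (Himd k 0%N) => x; rewrite H0.
Qed.

Unset Implicit Arguments.
Record GS := MkGS { gn : nat; gS : 'rV[R]_gn -> Prop;
  gH : forall k, FP k (fun (a : R) (v : 'rV[R]_gn) => a *: v) gS }.

Definition Pst (s : GS) m (e : 'rV[R]_m -> 'rV[R]_(gn s)) : Prop :=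
  [/\ is_Rlinear (fun (a : R) (v : 'rV[R]_m) => a *: v) fr e,
      (forall v, gS s v <-> exists x, e x = v) &
      forall k, FP k (fun (a : R) (v : 'rV[R]_m) => a *: v) (fun x => e x = 0)].

Lemma step_ex (s : GS) : exists m (e : 'rV[R]_m -> 'rV[R]_(gn s)), Pst s m e.
Proof.
have [m [e [He [Him _]]]] := gH s 1.
exists m, e; split=> // k; apply: (SCH (ismod_free _ _) He Him); exact: gH.
Qed.

Definition stm s := proj1_sig (constructive_indefinite_description _ (step_ex s)).
Lemma stm_spec s : exists e : 'rV[R]_(stm s) -> 'rV[R]_(gn s), Pst s (stm s) e.
Proof. exact: (proj2_sig (constructive_indefinite_description _ (step_ex s))). Qed.
Definition ste s := proj1_sig (constructive_indefinite_description _ (stm_spec s)).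
Lemma ste_spec s : Pst s (stm s) (ste s).
Proof. exact: (proj2_sig (constructive_indefinite_description _ (stm_spec s))). Qed.

Lemma nxt_H s : forall k, FP k (fun (a : R) (v : 'rV[R]_(stm s)) => a *: v)
   (fun x => ste s x = 0).
Proof. by case: (ste_spec s). Qed.

Definition nxt (s : GS) : GS := MkGS (stm s) (fun x => ste s x = 0) (nxt_H s).

Fixpoint st (s0 : GS) k := match k with 0 => s0 | k.+1 => nxt (st s0 k) end.

Lemma FP_to_res (M : zmodType) (act : R -> M -> M) : ismod act ->
  (forall k, FP k act (fun _ => True)) -> has_fgfree_resolution act.
Proof.
move=> HM H.
have [n0 [eps [Heps [Him _]]]] := H 1%N.
have Hk : forall k, FP k (fun (a : R) (v : 'rV[R]_n0) => a *: v) (fun x => eps x = 0).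
  move=> k; exact: (SCH HM Heps Him (H k.+1)).
pose s0 := MkGS n0 (fun x => eps x = 0) Hk.
exists (fun k => gn (st s0 k)), (fun k => ste (st s0 k)), eps.
split=> //; split; first by move=> k; case: (ste_spec (st s0 k)).
split; first by move=> m; apply/Him.
split.
- move=> x; case: (ste_spec s0) => _ Hi _; exact: (Hi x).
- move=> k x; case: (ste_spec (st s0 k.+1)) => _ Hi _; exact: (Hi x).
Qed.

End Res.
Set Implicit Arguments.

Section Main.
Variables (A B : pzRingType) (f : {rmorphism A -> B}).

Lemma ismod_restr (V : zmodType) (act : B -> V -> V) : ismod act ->
  ismod (fun (a : A) v => act (f a) v).
Proof.
case=> H1 H2 H3 H4; split=> *; rewrite ?H1 ?rmorphD ?H2 ?H3 ?rmorphM ?rmorph1 ?H4 //.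
Qed.

Lemma lin_restr (U V : zmodType) (aU : B -> U -> U) (aV : B -> V -> V) (g : U -> V) :
  is_Rlinear aU aV g -> is_Rlinear (fun (a : A) u => aU (f a) u) (fun (a : A) v => aV (f a) v) g.
Proof. by case=> H1 H2; split=> *; rewrite ?H1 ?H2. Qed.

Lemma freeA (HB : has_fgfree_resolution (fun (a : A) (b : B) => f a * b)) k n :
  FP k (fun (a : A) (v : 'rV[B]_n) => f a *: v) (fun _ => True).
Proof.
have H1 : FP k (fun (a : A) (v : 'rV[B]_1) => f a *: v) (fun _ => True).
  apply: (FP_inj (phi := fun b : B => (const_mx b : 'rV[B]_1)) _ _ _ (res_to_FP HB k)).
  - by split=> *; apply/rowP => i; rewrite !mxE.
  - by move=> b b' /rowP /(_ 0); rewrite !mxE.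
  - move=> w; split=> // _; exists (w 0 0); split=> //.
    by apply/rowP => i; rewrite !mxE (ord1 i).
elim: n => [|n IH].
  apply: FP_ext (FP_zero _ (ismod_restr (ismod_free _ _))) => v; split=> // _.
  exact: thinmx0.
have : FP k (fun (a : A) (v : 'rV[B]_(1 + n)) => f a *: v) (fun _ => True).
  apply: (ext (Q := fun _ => True) (psi := fun x : 'rV[B]_(1 + n) => rsubmx x)).
  - exact: (ismod_restr (ismod_free _ _)).
  - by split.
  - exact: (lin_restr (lin_rsub _ _ _)).
  - by move=> w; split=> // _; exists (row_mx 0 w); rewrite row_mxKr.
  - apply: (FP_inj (phi := fun u : 'rV[B]_1 => row_mx u (0 : 'rV[B]_n)) _ _ _ H1).
    + exact: (lin_restr (lin_rowmx (lin_id _) (lin_zero _ (ismod_free _ _)))).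
    + by move=> z z' /eq_row_mx [].
    + move=> x; split.
      * case=> _ Hr0; exists (lsubmx x); split=> //; by rewrite -Hr0 hsubmxK.
      * by case=> z [_ <-]; rewrite row_mxKr.
  - exact: IH.
by [].
Qed.

Lemma D1 (HB : has_fgfree_resolution (fun (a : A) (b : B) => f a * b)) k :
  forall (V : zmodType) (act : B -> V -> V) (S : V -> Prop), ismod act ->
  FP k act S -> FP k (fun (a : A) v => act (f a) v) S.
Proof.
elim: k => [|k IH] V act S HV [n [e [He [Him Hk]]]].
  apply: (FP0_img (phi := e) (lin_restr He) _ (freeA HB 0 n)) => v.
  rewrite Him; split=> [[x H]|[x [_ H]]]; by exists x.
apply: (quot (aV := fun (a : A) (v : 'rV[B]_n) => f a *: v) (S := fun _ => True) (phi := e)).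
- exact: ismod_restr HV.
- exact: lin_restr He.
- move=> v; rewrite Him; split=> [[x H]|[x [_ H]]]; by exists x.
- apply: FP_ext (IH _ _ _ (ismod_free _ _) Hk) => x; by split=> [H|[_ H]].
- exact: (freeA HB k.+1 n).
Qed.

Lemma D2 (HB : has_fgfree_resolution (fun (a : A) (b : B) => f a * b)) k :
  forall (V : zmodType) (act : B -> V -> V) (S : V -> Prop), ismod act -> submod act S ->
  (forall j, FP j (fun (a : A) v => act (f a) v) S) -> FP k act S.
Proof.
elim: k => [|k IH] V act S HV HS HA;
 have [m [e [He [Him _]]]] := HA 0%N;
 pose E := fun y : 'rV[B]_m => \sum_i act (y 0 i) (e (delta_mx 0 i));
 (have linE : is_Rlinear (fun (b : B) (v : 'rV[B]_m) => b *: v) act E by exact: lin_comb);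
 (have imE : forall v, S v <-> exists y, E y = v;
  [ case: HS => S0 SD SN SZ; move=> v; split;
    [ move=> /Him [x <-]; exists (map_mx f x); rewrite /E {2}(row_sum_delta x) (lin_sum _ _ He);
      apply: eq_bigr => i _; case: He => _ ->; by rewrite mxE
    | case=> y <-; apply: (big_ind S) => // i _; apply: SZ; apply/Him; by eexists ]
  | ]);
 exists m, E; (split; first exact: linE); split=> //.
apply: IH.
- exact: ismod_free.
- exact: submod_ker HV linE.
- move=> j; apply: FP_ext (kern (P := fun _ => True) (Q := S) (psi := E) _ _ _ _ (freeA HB j m) (HA j.+1)).
  + by move=> x; split=> [[]|].
  + exact: (ismod_restr (ismod_free _ _)).
  + exact: ismod_restr HV.
  + exact: lin_restr linE.
  + move=> v; rewrite imE; split=> [[x H]|[x [_ H]]]; by exists x.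
Qed.

End Main.

Theorem lemma4p7 (A B : pzRingType) (f : {rmorphism A -> B})
  (f_inj : injective f)
  (HB : has_fgfree_resolution (fun (a : A) (b : B) => f a * b))
  (M : lmodType B) :
  has_fgfree_resolution (fun (b : B) (m : M) => b *: m) <->
  has_fgfree_resolution (fun (a : A) (m : M) => f a *: m).
Proof.
split=> H.
- refine (FP_to_res _ _ _ (ismod_restr f (ismod_lmod M)) _) => k.
  exact (D1 HB (ismod_lmod M) (res_to_FP H k)).
- refine (FP_to_res _ _ _ (ismod_lmod M) _) => k.
  refine (D2 HB k (ismod_lmod M) _ _); first by split.
  exact: res_to_FP H.
Qed.
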